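(* Let $T$ be a tree of order $n$ and dissociation number $\psi$. If $v$ is a leaf of $T$ such that $\psi(T-v)=\psi(T)$, then $\Phi_{\overline{v}}(T)\le \min\{\Phi_v^0(T),\Phi_v^1(T)\}$ and $\Phi_{\overline{v}}(T)\le \frac{1}{3}\Phi(T)$.
   Context: All graphs are finite, simple and undirected. A dissociation set in a graph $G$ is a vertex subset $F$ such that the induced subgraph $G[F]$ has maximum degree at most $1$; a maximum dissociation set is one of maximum cardinality, and the dissociation number $\psi(G)$ is that cardinality. Let $MD(G)$ be the set of all maximum dissociation sets of $G$ and $\Phi(G)=|MD(G)|$. For a vertex $v$: $\Phi_{\overline{v}}(G)=|\{F\in MD(G): v\notin F\}|$, $\Phi_v^0(G)=|\{F\in MD(G): v\in F,\ d_{G[F]}(v)=0\}|$, $\Phi_v^1(G)=|\{F\in MD(G): v\in F,\ d_{G[F]}(v)=1\}|$. A leaf is a vertex of degree exactly one; $T-v$ denotes $T$ with $v$ deleted. *)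

(* Defs.v *)
From mathcomp Require Import all_boot all_order.
Set Implicit Arguments. Unset Strict Implicit. Unset Printing Implicit Defensive.

Definition simple_graph (T : finType) (e : rel T) : Prop :=
  symmetric e /\ irreflexive e.

Section Dissoc.
Variables (T : finType) (e : rel T).

Definition nbhd (x : T) : {set T} := [set y | e x y].

Definition deg_in (F : {set T}) (x : T) : nat := #|nbhd x :&: F|.

Definition edges : {set {set T}} := [set [set x; y] | x in T, y in T & e x y].

Definition connected_graph : Prop := forall x y : T, connect e x y.

Definition is_tree : Prop :=
  simple_graph e /\ 0 < #|T| /\ connected_graph /\ #|edges| = #|T| - 1.

Definition leaf (v : T) : bool := #|nbhd v| == 1.

(* dissociation set of the induced subgraph G[S] (S = vertex set of the
   subgraph; S = setT is G itself, S = [set~ v] is G - v) *)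
Definition dissoc_in (S F : {set T}) : bool :=
  (F \subset S) && [forall x in F, deg_in F x <= 1].

Definition psi_in (S : {set T}) : nat :=
  \max_(F : {set T} | dissoc_in S F) #|F|.

Definition psi : nat := psi_in setT.

Definition MD : {set {set T}} :=
  [set F | dissoc_in setT F & #|F| == psi].

Definition Phi : nat := #|MD|.
Definition Phi_bar (v : T) : nat := #|[set F in MD | v \notin F]|.
Definition Phi0 (v : T) : nat := #|[set F in MD | (v \in F) && (deg_in F v == 0)]|.
Definition Phi1 (v : T) : nat := #|[set F in MD | (v \in F) && (deg_in F v == 1)]|.
End Dissoc.

(* Main.v *)
Require Import Defs.
From mathcomp Require Import all_boot all_order.
Set Implicit Arguments. Unset Strict Implicit. Unset Printing Implicit Defensive.

Definition Dis (T : finType) (e : rel T) (F : {set T}) :=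
  forall x y z, x \in F -> y \in F -> z \in F -> e x y -> e x z -> y = z.

Lemma DisP (T : finType) (e : rel T) (F : {set T}) :
  dissoc_in e setT F <-> Dis e F.
Proof.
split.
- move/andP=> [_ /forall_inP H] x y z xF yF zF exy exz.
  have /card_le1_eqP := H x xF; apply; by rewrite !inE ?exy ?exz ?yF ?zF.
- move=> H; apply/andP; split; first exact: subsetT.
  apply/forall_inP => x xF; apply/card_le1_eqP => y z.
  rewrite !inE => /andP[exy yF] /andP[exz zF]; exact: (H x).
Qed.

Lemma psi_bound (T : finType) (e : rel T) (F : {set T}) :
  Dis e F -> #|F| <= psi e.
Proof. move/DisP=> H; rewrite /psi /psi_in. exact: (@leq_bigmax_cond _ (fun G : {set T} => dissoc_in e setT G) (fun G : {set T} => #|G|) F H). Qed.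

Lemma MDP (T : finType) (e : rel T) (F : {set T}) :
  (F \in MD e) <-> Dis e F /\ #|F| = psi e.
Proof.
rewrite inE; split.
- by move/andP=> [/DisP ? /eqP ?].
- by move=> [/DisP -> ->]; rewrite eqxx.
Qed.

Lemma card3 (T : finType) (A B C D : {set T}) :
  A :&: B = set0 -> (A :|: B) :&: C = set0 -> A :|: B :|: C \subset D ->
  #|A| + #|B| + #|C| <= #|D|.
Proof.
move=> dAB dABC sub.
have e1 : #|A :|: B| = #|A| + #|B| by rewrite cardsU dAB cards0 subn0.
have e2 : #|A :|: B :|: C| = #|A :|: B| + #|C| by rewrite cardsU dABC cards0 subn0.
rewrite -e1 -e2; exact: subset_leq_card.
Qed.

Theorem lemma3p1 (T : finType) (e : rel T) (v : T) :
  is_tree e -> leaf e v -> psi_in e [set~ v] = psi e ->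
  Phi_bar e v <= minn (Phi0 e v) (Phi1 e v) /\ 3 * Phi_bar e v <= Phi e.
Proof.
move=> [[sym irr] _] hleaf _.
have [u hu] : exists u, nbhd e v = [set u] by apply/cards1P.
have hv : forall y, e v y = (y == u).
  by move=> y; move/setP/(_ y): hu; rewrite !inE.
have hv' : forall y, e y v = (y == u) by move=> y; rewrite sym.
have uv : u != v.
  by apply/negP => /eqP E; have := hv u; rewrite eqxx E irr.
have addv : forall F, Dis e F -> (forall y, u \in F -> y \in F -> e u y -> False)
    -> Dis e (v |: F).
  move=> F DF H x y z; rewrite !inE.
  case/predU1P => [->|xF].
    by move=> _ _; rewrite !hv => /eqP-> /eqP->.
  case/predU1P=> [->|yF]; case/predU1P=> [->|zF] //.
  - move=> exv exz; have xu : x = u by apply/eqP; rewrite -hv'.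
    by subst x; case: (H z xF zF exz).
  - move=> exy exv; have xu : x = u by apply/eqP; rewrite -hv'.
    by subst x; case: (H y xF yF exy).
  - exact: DF.
have keyF : forall F, F \in MD e -> v \notin F -> u \in F /\ exists w, (w \in F) && e u w.
  move=> F /MDP[DF cF] vF.
  have Hc : ~ Dis e (v |: F).
    by move=> D'; have := psi_bound D'; rewrite cardsU1 vF cF add1n ltnn.
  case: (pickP [pred y | (u \in F) && (y \in F) && e u y]) => [w /= /andP[/andP[uF wF] euw] | none].
    by split=> //; exists w; rewrite wF euw.
  exfalso; apply: Hc; apply: addv => // y uF yF euy.
  by have := none y; rewrite /= uF yF euy.
pose wF := fun F : {set T} => odflt u [pick y in F | e u y].
have wspec : forall F, F \in MD e -> v \notin F ->
    [/\ u \in F, wF F \in F, e u (wF F) & forall y, y \in F -> e u y -> y = wF F].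
  move=> F MF vF; have [uF [w /andP[wF' euw]]] := keyF F MF vF.
  move/MDP: (MF) => [DF _].
  rewrite /wF; case: pickP => [y /andP[yF euy] | none]; last first.
    by move: (none w); rewrite /= wF' euw.
  by split=> // z zF euz; apply: (DF u).

have part0 : Phi_bar e v <= Phi0 e v.
  rewrite /Phi_bar /Phi0.
  pose f0 := fun F : {set T} => v |: (F :\ u).
  rewrite -(@card_in_imset _ _ f0); last first.
    move=> F1 F2; rewrite inE => /andP[M1 v1]; rewrite inE => /andP[M2 v2] E.
    have [u1 _] := keyF F1 M1 v1; have [u2 _] := keyF F2 M2 v2.
    apply/setP=> x; move/setP/(_ x): E; rewrite /f0 !inE.
    case: (eqVneq x u) => [->|xu]; first by rewrite u1 u2.
    case: (eqVneq x v) => [->|xv] /=; first by rewrite (negbTE v1) (negbTE v2).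
    by [].
  apply: subset_leq_card; apply/subsetP => G /imsetP[F]; rewrite inE => /andP[MF vF] ->.
  have [uF wF' euw wu] := wspec F MF vF. move/MDP: (MF) => [DF cF].
  rewrite inE; apply/andP; split; [apply/MDP; split | ].
  - move=> x y z; rewrite /f0 !inE.
    case/predU1P=> [->|/andP[xu xF]].
      move=> yG _; rewrite hv => /eqP yu; move: yG; rewrite yu eqxx (negbTE uv) //.
    case/predU1P=> [->|/andP[_ yF]]; first by rewrite hv' (negbTE xu).
    case/predU1P=> [->|/andP[_ zF]]; first by rewrite hv' (negbTE xu).
    exact: DF.
  - rewrite /f0 cardsU1 !inE (negbTE vF) andbF /= -cF (cardsD1 u F) uF //.
  - rewrite /f0 !inE eqxx /= /deg_in cards_eq0; apply/eqP/setP=> y; rewrite !inE hv.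
    by case: eqVneq => [->|] //=; rewrite (negbTE uv).

have part1 : Phi_bar e v <= Phi1 e v.
  rewrite /Phi_bar /Phi1.
  pose f1 := fun F : {set T} => v |: (F :\ wF F).
  rewrite -(@card_in_imset _ _ f1); last first.
    move=> F1 F2; rewrite inE => /andP[M1 v1]; rewrite inE => /andP[M2 v2] E.
    have [u1 w1F euw1 wu1] := wspec F1 M1 v1.
    have [u2 w2F euw2 wu2] := wspec F2 M2 v2.
    move/MDP: (M1) => [D1 c1]; move/MDP: (M2) => [D2 c2].
    set w1 := wF F1 in w1F euw1 wu1 E *.
    set w2 := wF F2 in w2F euw2 wu2 E *.
    have Ex : forall x, ((x != w1) && (x \in F1)) = ((x != w2) && (x \in F2)).
      move=> x; move/setP/(_ x): E; rewrite /f1 -/w1 -/w2 !inE.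
      case: (eqVneq x v) => [-> _|_ /= ->] //=.
      by rewrite (negbTE v1) (negbTE v2) !andbF.
    suff w12 : w1 = w2.
      apply/setP=> x; have := Ex x; rewrite -w12.
      by case: (eqVneq x w1) => [->|] //=; rewrite w1F; move: w2F; rewrite -w12 => ->.
    apply/eqP/negPn/negP => w12.
    have w2F1 : w2 \notin F1.
      by apply/negP=> h; have := Ex w2; rewrite eqxx /= eq_sym w12 h.
    have w1F2 : w1 \notin F2.
      by apply/negP=> h; have := Ex w1; rewrite eqxx /= (negbTE w12) h.
    have uw1 : u != w1 by apply/eqP=> h; move: euw1; rewrite -h irr.
    have uw2 : u != w2 by apply/eqP=> h; move: euw2; rewrite -h irr.
    have vw1 : v != w1 by apply/eqP=> h; move: v1; rewrite h w1F.
    have vw2 : v != w2 by apply/eqP=> h; move: v2; rewrite h w2F.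
    have n1 : forall y, y \in F1 -> e w1 y -> y = u.
      move=> y yF ey; apply: (D1 w1) => //; by rewrite sym.
    have n2 : forall y, y \in F2 -> e w2 y -> y = u.
      move=> y yF ey; apply: (D2 w2) => //; by rewrite sym.
    pose S := F1 :\ w1 :\ u.
    have SP : forall y, y \in S -> [/\ y \in F1, y \in F2, y != u, y != w1 & y != w2].
      move=> y; rewrite !inE => /andP[yu /andP[yw1 yF1]].
      have := Ex y; rewrite yw1 yF1 /= => /esym/andP[yw2 yF2].
      by split.
    pose K := v |: (w1 |: (w2 |: S)).
    have DK : Dis e K.
      have C1 : forall y, y \in K -> e w1 y -> y = w2.
        move=> y; rewrite /K !in_setU1.
        case/predU1P=> [->|]; first by rewrite hv' eq_sym (negbTE uw1).
        case/predU1P=> [->|]; first by rewrite irr.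
        case/predU1P=> [->|] // yS ey.
        have [yF1 _ yu _ _] := SP y yS.
        by move: yu; rewrite (n1 y yF1 ey) eqxx.
      have C2 : forall y, y \in K -> e w2 y -> y = w1.
        move=> y; rewrite /K !in_setU1.
        case/predU1P=> [->|]; first by rewrite hv' eq_sym (negbTE uw2).
        case/predU1P=> [->|] //.
        case/predU1P=> [->|]; first by rewrite irr.
        move=> yS ey.
        have [_ yF2 yu _ _] := SP y yS.
        by move: yu; rewrite (n2 y yF2 ey) eqxx.
      move=> x y z xK yK zK exy exz.
      move: (xK); rewrite /K !in_setU1.
      case/predU1P=> [xv|].
        by move: yK exy; rewrite xv hv => + /eqP yu; rewrite yu !inE (negbTE uv) (negbTE uw1) (negbTE uw2) eqxx.
      case/predU1P=> [xw|].
        by subst x; rewrite (C1 y yK exy) (C1 z zK exz).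
      case/predU1P=> [xw|].
        by subst x; rewrite (C2 y yK exy) (C2 z zK exz).
      move=> xS; have [xF1 xF2 xu xw1 xw2] := SP x xS.
      have inS : forall y, y \in K -> e x y -> y \in S.
        move=> y'; rewrite /K !in_setU1.
        case/predU1P=> [->|]; first by rewrite hv' (negbTE xu).
        case/predU1P=> [->|]; first by rewrite sym => /(n1 x xF1) xu'; move: xu; rewrite xu' eqxx.
        case/predU1P=> [->|]; first by rewrite sym => /(n2 x xF2) xu'; move: xu; rewrite xu' eqxx.
        by [].
      have [yF1 _ _ _ _] := SP y (inS y yK exy).
      have [zF1 _ _ _ _] := SP z (inS z zK exz).
      exact: (D1 x).
    have := psi_bound DK.
    have m1 : v \notin w1 |: (w2 |: S).
      by rewrite !inE (negbTE vw1) (negbTE vw2) (negbTE v1) !andbF.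
    have m2 : w1 \notin w2 |: S by rewrite !inE (negbTE w12) eqxx /= andbF.
    have m3 : w2 \notin S by rewrite !inE (negbTE w2F1) !andbF.
    have cS : #|F1| = (#|S|).+2.
      by rewrite /S (cardsD1 w1 F1) w1F (cardsD1 u (F1 :\ w1)) !inE uw1 u1.
    by rewrite /K !cardsU1 m1 m2 m3 -c1 cS !add1n ltnn.
  apply: subset_leq_card; apply/subsetP => G /imsetP[F]; rewrite inE => /andP[MF vF] ->.
  have [uF wF' euw wu] := wspec F MF vF. move/MDP: (MF) => [DF cF].
  set w := wF F in wF' euw wu *.
  have uw : u != w by apply/eqP=> h; move: euw; rewrite -h irr.
  have vw : v != w by apply/eqP=> h; move: vF; rewrite h wF'.
  rewrite inE; apply/andP; split; [apply/MDP; split | ].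
  - move=> x y z; rewrite /f1 -/w !inE.
    case/predU1P=> [->|/andP[xw xF]].
      by move=> _ _; rewrite !hv => /eqP-> /eqP->.
    case: (eqVneq x u) => [xu|xu].
      subst x.
      have yv : forall y, (y == v) || (y != w) && (y \in F) -> e u y -> y = v.
        move=> y'; case/predU1P=> [//|/andP[yw yF]] ey.
        by move: yw; rewrite (wu y' yF ey) eqxx.
      by move=> yG zG ey ez; rewrite (yv y yG ey) (yv z zG ez).
    case/predU1P=> [->|/andP[_ yF]]; first by rewrite hv' (negbTE xu).
    case/predU1P=> [->|/andP[_ zF]]; first by rewrite hv' (negbTE xu).
    exact: DF.
  - rewrite /f1 -/w cardsU1 !inE (negbTE vF) andbF /= -cF (cardsD1 w F) wF' //.
  - rewrite /f1 -/w !inE eqxx /= /deg_in; apply/cards1P; exists u.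
    apply/setP=> y; rewrite !inE hv.
    by case: eqVneq => [->|] //=; rewrite (negbTE uv) uw uF.
have hsum : Phi_bar e v + Phi0 e v + Phi1 e v <= Phi e.
  apply: card3.
  - apply/setP=> F; rewrite !inE.
    by case: (v \in F); rewrite ?andbF.
  - apply/setP=> F; rewrite !inE.
    case: (v \in F); rewrite ?andbF //= ?andbT.
    case: (deg_in e F v) => [|[|n]]; by rewrite ?andbF.
  - apply/subsetP=> F; rewrite !inE.
    by case/orP=> [/orP[]|] /andP[].
split; first by rewrite leq_min part0 part1.
rewrite mulSn mul2n -addnn; apply: leq_trans hsum.
by rewrite -addnA leq_add2l leq_add.
Qed.
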